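(* Let $\omega$ be a weight on a countable group $G$, and let $\mu$ be a probability measure on $G$ with $\mu\in\ell^{q_0}(G,\omega_{p_0})$, where $1<q_0\le p_0<\infty$ and $\frac1{p_0}+\frac1{q_0}=1$. (i) The map $[p_0,\infty)\to\mathbb{R}$, $p\mapsto-p\log\|\mu\|_{q,\omega_p}$, where $\frac1p+\frac1q=1$, is increasing. (ii) If in addition $\mu$ has finite Shannon entropy and finite $\log\omega$-moment, then \[ H_\omega(G,\mu)=\lim_{p\to\infty}-p\log\|\mu\|_{q,\omega_p},\qquad\frac1p+\frac1q=1. \]
   Context: A weight on $G$ is $\omega:G\to[a,\infty)$, $a>0$, with $\omega(st)\le C\omega(s)\omega(t)$ for some $C>0$. For $p\ge1$, $\omega_p=\omega^{1/p}$. For a weight $\sigma$ and $1\le q<\infty$, $\ell^q(G,\sigma)=\{f:\|f\|_{q,\sigma}<\infty\}$ with $\|f\|_{q,\sigma}=\big(\sum_s|f(s)|^q\sigma(s)^q\big)^{1/q}$. Shannon entropy $H(G,\mu)=-\sum_s\mu(s)\log\mu(s)$; finite $\log\omega$-moment means $\sum_s\mu(s)\log\omega(s)<\infty$. The weighted Shannon entropy is $H_\omega(G,\mu)=-\sum_s\mu(s)\log[\mu(s)\omega(s)]$. *)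

(* Defs.v *)
From HB Require Import structures.
From mathcomp Require Import all_boot all_order all_algebra.
From mathcomp Require Import all_classical all_reals all_analysis.
Set Implicit Arguments. Unset Strict Implicit. Unset Printing Implicit Defensive.
Import Order.TTheory GRing.Theory Num.Theory.
Local Open Scope classical_set_scope.
Local Open Scope ring_scope.

Definition is_group (G : Type) (mul : G -> G -> G) (e : G) (inv : G -> G) :=
  [/\ (forall x y z, mul x (mul y z) = mul (mul x y) z),
      (forall x, mul e x = x), (forall x, mul x e = x),
      (forall x, mul (inv x) x = e) & (forall x, mul x (inv x) = e)].

Definition is_weight (R : realType) (G : Type) (mul : G -> G -> G)
    (omega : G -> R) :=
  (exists2 a : R, 0 < a & forall s, a <= omega s) /\
  (exists2 C : R, 0 < C & forall s t, omega (mul s t) <= C * omega s * omega t).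

Definition wpow (R : realType) (G : Type) (omega : G -> R) (p : R) : G -> R :=
  fun s => omega s `^ p^-1.

Definition wsum (R : realType) (G : choiceType) (q : R) (sigma f : G -> R) : \bar R :=
  (\esum_(s in [set: G]) ((`|f s| `^ q * sigma s `^ q)%:E))%E.

Definition in_lq (R : realType) (G : choiceType) (q : R) (sigma f : G -> R) : Prop :=
  (wsum q sigma f < +oo)%E.

(* ||f||_{q,sigma} (meaningful when f in l^q(G,sigma)) *)
Definition wnorm (R : realType) (G : choiceType) (q : R) (sigma f : G -> R) : R :=
  fine (wsum q sigma f) `^ q^-1.

Definition conjexp (R : realType) (p : R) : R := p / (p - 1).

(* probability measure on G (all subsets measurable, G countable) *)
Definition is_prob (R : realType) (G : choiceType) (mu : G -> R) : Prop :=
  (forall s, 0 <= mu s) /\ (\esum_(s in [set: G]) (mu s)%:E = 1)%E.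

Definition sumG (R : realType) (G : choiceType) (f : G -> R) : \bar R :=
  (\esum_(s in [set: G]) (Num.max (f s) 0)%:E -
   \esum_(s in [set: G]) (Num.max (- f s) 0)%:E)%E.

Definition shannon (R : realType) (G : choiceType) (mu : G -> R) : \bar R :=
  sumG (fun s => - (mu s * ln (mu s))).

Definition log_moment (R : realType) (G : choiceType) (omega mu : G -> R) : \bar R :=
  sumG (fun s => mu s * ln (omega s)).

Definition wshannon (R : realType) (G : choiceType) (omega mu : G -> R) : \bar R :=
  sumG (fun s => - (mu s * ln (mu s * omega s))).

Definition Phi (R : realType) (G : choiceType) (omega mu : G -> R) (p : R) : R :=
  - (p * ln (wnorm (conjexp p) (wpow omega p) mu)).

(* Main.v *)
Require Import Defs.
From HB Require Import structures.
From mathcomp Require Import all_boot all_order all_algebra.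
From mathcomp Require Import all_classical all_reals all_analysis.
From mathcomp Require Import ring lra.
Import Order.TTheory GRing.Theory Num.Theory.
Local Open Scope classical_set_scope.
Local Open Scope ring_scope.

Set Implicit Arguments. Unset Strict Implicit.

Section SumTheory.
Variables (R : realType) (G : choiceType).
Implicit Types f g : G -> R.

Definition nsum f : \bar R := (\esum_(s in [set: G]) (f s)%:E)%E.
Definition fp f : G -> R := fun s => Num.max (f s) 0%R.
Definition fn f : G -> R := fun s => Num.max (- (f s))%R 0%R.
Definition summ f := (nsum (fun s => (`|f s|)%R) < +oo)%E.
Definition S f := fine (nsum (fp f)) - fine (nsum (fn f)).

Lemma maxcase (y : R) :
  (0 <= y /\ Num.max y 0 = y /\ Num.max (-y) 0 = 0 /\ `|y| = y) \/
  (y < 0 /\ Num.max y 0 = 0 /\ Num.max (-y) 0 = -y /\ `|y| = -y).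
Proof.
have [h|h] := boolP (0 <= y); [left|right; rewrite -ltNge in h].
  rewrite (@max_l _ _ y 0) // (@max_r _ _ (-y) 0) ?oppr_le0 // ger0_norm //.
rewrite (@max_r _ _ y 0) ?ltW // (@max_l _ _ (-y) 0) ?oppr_ge0 ?ltW // ltr0_norm //.
Qed.

Lemma fp_ge0 f s : 0 <= fp f s.
Proof. rewrite /fp; case: (maxcase (f s)) => [[h [-> _]]|[h [-> _]]]; lra. Qed.
Lemma fn_ge0 f s : 0 <= fn f s.
Proof. rewrite /fn; case: (maxcase (f s)) => [[h [_ [-> _]]]|[h [_ [-> _]]]]; lra. Qed.

Lemma nsum_ge0 f : (forall s, 0 <= f s) -> (0 <= nsum f)%E.
Proof. by move=> f0; apply: esum_ge0 => s _; rewrite lee_fin. Qed.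

Lemma le_nsum {f g} : (forall s, f s <= g s) -> (nsum f <= nsum g)%E.
Proof. by move=> fg; apply: le_esum => s _; rewrite lee_fin. Qed.

Lemma nsum_lt {f g} : (forall s, f s <= g s) -> (nsum g < +oo)%E -> (nsum f < +oo)%E.
Proof. by move=> fg hg; exact: le_lt_trans (le_nsum fg) hg. Qed.

Lemma nsumD {f g} : (forall s, 0 <= f s) -> (forall s, 0 <= g s) ->
  nsum (fun s => f s + g s) = (nsum f + nsum g)%E.
Proof.
move=> f0 g0; rewrite /nsum -esumD; last 2 first.
- by move=> s _; rewrite lee_fin.
- by move=> s _; rewrite lee_fin.
by apply: eq_esum => s _; rewrite EFinD.
Qed.

Lemma nsumZ k f : 0 <= k -> (forall s, 0 <= f s) ->
  nsum (fun s => k * f s) = (k%:E * nsum f)%E.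
Proof.
move=> k0 f0; rewrite /nsum /esum -ereal_supZl //.
congr ereal_sup; apply/seteqP; split => x /=.
- case=> A [finA _] <-; exists (\sum_(i \in A) (f i)%:E)%E; first by exists A.
  by rewrite !fsumEFin // -EFinM mulr_fsumr.
- case=> y [A [finA _] <-] <-; exists A; first by split.
  by rewrite !fsumEFin // -EFinM mulr_fsumr.
apply/set0P; exists (\sum_(x \in set0) (f x)%:E)%E; exists set0 => //.
Qed.

Lemma nsum_fin {f} : (forall s, 0 <= f s) -> (nsum f < +oo)%E -> nsum f \is a fin_num.
Proof. by move=> f0 h; rewrite ge0_fin_numE // nsum_ge0. Qed.

Lemma nsumE {f} : (forall s, 0 <= f s) -> (nsum f < +oo)%E -> nsum f = (fine (nsum f))%:E.
Proof. by move=> f0 h; rewrite fineK // nsum_fin. Qed.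

Lemma nsum0 : nsum (fun _ => 0) = 0%E.
Proof. by apply: esum1. Qed.

Lemma nsum_ge_pt f s : (forall s, 0 <= f s) -> ((f s)%:E <= nsum f)%E.
Proof.
move=> f0; rewrite /nsum (esumID [set s]); last by move=> i _; rewrite lee_fin.
rewrite setTI esum_set1 ?lee_fin //; apply: leeDl.
by apply: esum_ge0 => i _; rewrite lee_fin.
Qed.

Lemma summ_fp {f} : summ f -> (nsum (fp f) < +oo)%E.
Proof.
apply: nsum_lt => s; rewrite /fp.
by case: (maxcase (f s)) => [[h [-> [_ ->]]]|[h [-> [_ ->]]]] //; lra.
Qed.
Lemma summ_fn {f} : summ f -> (nsum (fn f) < +oo)%E.
Proof.
apply: nsum_lt => s; rewrite /fn.
by case: (maxcase (f s)) => [[h [_ [-> ->]]]|[h [_ [-> ->]]]] //; lra.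
Qed.

Lemma summ_le {f g} : (forall s, `|f s| <= `|g s|) -> summ g -> summ f.
Proof. exact: nsum_lt. Qed.

Lemma summ_ge0 f : (forall s, 0 <= f s) -> (nsum f < +oo)%E -> summ f.
Proof.
move=> f0 h; apply: nsum_lt h => s; by rewrite ger0_norm.
Qed.

Lemma summ_nsum {f} : summ f -> (forall s, 0 <= f s) -> (nsum f < +oo)%E.
Proof. by move=> h f0; apply: nsum_lt h => s; rewrite ger0_norm. Qed.

Lemma summD {f g} : summ f -> summ g -> summ (fun s => f s + g s).
Proof.
move=> hf hg; rewrite /summ.
apply: (@nsum_lt _ (fun s => `|f s| + `|g s|)) => [s|]; first exact: ler_normD.
by rewrite (nsumD (fun s => normr_ge0 (f s)) (fun s => normr_ge0 (g s))); apply: lte_add_pinfty.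
Qed.

Lemma summZ k {f} : summ f -> summ (fun s => k * f s).
Proof.
move=> hf; rewrite /summ.
apply: (@nsum_lt _ (fun s => `|k| * `|f s|)) => [s|]; first by rewrite normrM.
rewrite nsumZ // (nsumE (fun s => normr_ge0 (f s)) hf) //; by rewrite -EFinM ltry.
Qed.

Lemma summN {f} : summ f -> summ (fun s => - f s).
Proof. by apply: summ_le => s; rewrite normrN. Qed.

Lemma summB {f g} : summ f -> summ g -> summ (fun s => f s - g s).
Proof. by move=> hf hg; apply: summD => //; apply: summN. Qed.

Lemma S_ge0E f : (forall s, 0 <= f s) -> S f = fine (nsum f).
Proof.
move=> f0; rewrite /S.
have -> : fp f = f by apply: funext => s; rewrite /fp max_l.
have -> : fn f = (fun _ => 0) by apply: funext => s; rewrite /fn max_r // oppr_le0.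
by rewrite nsum0 subr0.
Qed.

Lemma SD f g : summ f -> summ g -> S (fun s => f s + g s) = S f + S g.
Proof.
move=> hf hg; have hfg := summD hf hg.
have E : (fun s => fp (fun s => f s + g s) s + (fn f s + fn g s)) =
         (fun s => fn (fun s => f s + g s) s + (fp f s + fp g s)).
  apply: funext => s; rewrite /fp /fn.
  case: (maxcase (f s)) => [[? [-> [-> _]]]|[? [-> [-> _]]]];
  case: (maxcase (g s)) => [[? [-> [-> _]]]|[? [-> [-> _]]]];
  case: (maxcase (f s + g s)) => [[? [-> [-> _]]]|[? [-> [-> _]]]]; lra.
have := congr1 nsum E.
have a0 : forall s, 0 <= fn f s + fn g s by move=> s; rewrite addr_ge0 ?fn_ge0.
have b0 : forall s, 0 <= fp f s + fp g s by move=> s; rewrite addr_ge0 ?fp_ge0.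
rewrite (nsumD (fp_ge0 (fun s => f s + g s)) a0) (nsumD (fn_ge0 f) (fn_ge0 g)).
rewrite (nsumD (fn_ge0 (fun s => f s + g s)) b0) (nsumD (fp_ge0 f) (fp_ge0 g)).
rewrite (nsumE (fp_ge0 _) (summ_fp hfg)) (nsumE (fn_ge0 _) (summ_fn hfg)) (nsumE (fp_ge0 _) (summ_fp hf))
  (nsumE (fn_ge0 _) (summ_fn hf)) (nsumE (fp_ge0 _) (summ_fp hg)) (nsumE (fn_ge0 _) (summ_fn hg)).
rewrite -!EFinD => -[]; rewrite /S; lra.
Qed.

Lemma SN f : S (fun s => - f s) = - S f.
Proof.
rewrite /S.
have -> : fp (fun s => - f s) = fn f by [].
have -> : fn (fun s => - f s) = fp f by apply: funext => s; rewrite /fn /fp opprK.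
lra.
Qed.

Lemma SB f g : summ f -> summ g -> S (fun s => f s - g s) = S f - S g.
Proof. by move=> hf hg; rewrite SD ?SN //; apply: summN. Qed.

Lemma SZ k f : summ f -> S (fun s => k * f s) = k * S f.
Proof.
move=> hf; rewrite /S.
have hfp := summ_fp hf; have hfn := summ_fn hf.
case: (boolP (0 <= k)) => k0; last rewrite -ltNge in k0.
  have -> : fp (fun s => k * f s) = (fun s => k * fp f s).
    by apply: funext => s; rewrite /fp maxr_pMr // mulr0.
  have -> : fn (fun s => k * f s) = (fun s => k * fn f s).
    by apply: funext => s; rewrite /fn maxr_pMr // mulr0 mulrN.
  rewrite !nsumZ //; try exact: fp_ge0; try exact: fn_ge0.
  rewrite !fineM //; try exact: nsum_fin (@fp_ge0 f) hfp; try exact: nsum_fin (@fn_ge0 f) hfn.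
  simpl; lra.
have nk : 0 <= - k by lra.
have -> : fp (fun s => k * f s) = (fun s => (- k) * fn f s).
  by apply: funext => s; rewrite /fp /fn maxr_pMr // mulr0 mulrNN.
have -> : fn (fun s => k * f s) = (fun s => (- k) * fp f s).
  by apply: funext => s; rewrite /fn /fp maxr_pMr // mulr0 mulNr.
rewrite !nsumZ //; try exact: fp_ge0; try exact: fn_ge0.
rewrite !fineM //; try exact: nsum_fin (@fp_ge0 f) hfp; try exact: nsum_fin (@fn_ge0 f) hfn.
simpl; lra.
Qed.

Lemma S_le f g : summ f -> summ g -> (forall s, f s <= g s) -> S f <= S g.
Proof.
move=> hf hg fg.
have : (nsum (fun s => (fp f s + fn g s)%R) <= nsum (fun s => (fp g s + fn f s)%R))%E.
  apply: le_nsum => s; rewrite /fp /fn; have := fg s.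
  case: (maxcase (f s)) => [[? [-> [-> _]]]|[? [-> [-> _]]]];
  case: (maxcase (g s)) => [[? [-> [-> _]]]|[? [-> [-> _]]]]; lra.
rewrite (nsumD (fp_ge0 f) (fn_ge0 g)) (nsumD (fp_ge0 g) (fn_ge0 f)).
rewrite (nsumE (fp_ge0 _) (summ_fp hf)) (nsumE (fn_ge0 _) (summ_fn hf)) (nsumE (fp_ge0 _) (summ_fp hg))
  (nsumE (fn_ge0 _) (summ_fn hg)).
rewrite -!EFinD lee_fin /S; lra.
Qed.

Lemma S_ge0 f : (forall s, 0 <= f s) -> 0 <= S f.
Proof. by move=> f0; rewrite S_ge0E // fine_ge0 // nsum_ge0. Qed.

Lemma S_ge_pt f s : (forall s, 0 <= f s) -> summ f -> f s <= S f.
Proof.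
move=> f0 hf; rewrite S_ge0E //.
have h := summ_nsum hf f0.
rewrite -lee_fin (nsumE f0 h) -?(nsumE f0 h) //; exact: nsum_ge_pt.
Qed.

End SumTheory.

Set Implicit Arguments. Unset Strict Implicit.

Section Tail.
Variables (R : realType) (G : choiceType).
Implicit Types f g : G -> R.

Lemma summ_fin (A : set G) f : finite_set A ->
  summ (fun s => if s \in A then f s else 0).
Proof.
move=> finA; rewrite /summ /nsum.
have -> : (\esum_(s in [set: G]) (`|if s \in A then f s else 0|)%:E)%E =
          (\esum_(s in A) (`|f s|)%:E)%E.
  by rewrite [RHS]esum_mkcond; apply: eq_esum => s _; case: (s \in A); rewrite ?normr0.
rewrite esum_fset //; try by move=> i _; rewrite lee_fin.
by rewrite fsumEFin // ltry.
Qed.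

Lemma tail f eps : (forall s, 0 <= f s) -> summ f -> 0 < eps ->
  exists A : set G, finite_set A /\ S (fun s => if s \in A then 0 else f s) <= eps.
Proof.
move=> f0 hf e0.
have hfin := nsum_fin f0 (summ_nsum hf f0).
have hfin' := hfin; rewrite /nsum /esum in hfin'.
have := ub_ereal_sup_adherent e0 hfin'.
case=> x [A [finA _] <-] hx.
exists A; split => //.
have g0 : forall s, 0 <= (if s \in A then 0 else f s) by move=> s; case: ifP.
rewrite S_ge0E //.
have -> : nsum (fun s => if s \in A then 0 else f s) = (\esum_(s in ~` A) (f s)%:E)%E.
  rewrite /nsum [RHS]esum_mkcond; apply: eq_esum => s _; rewrite in_setC.
  by case: (s \in A).
have E2 : nsum f = (\sum_(i \in A) (f i)%:E + \esum_(s in ~` A) (f s)%:E)%E.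
  rewrite /nsum (esumID A); last by move=> i _; rewrite lee_fin.
  rewrite setTI esum_fset //; try by move=> i _; rewrite lee_fin.
  by rewrite setTI.
have T0 : (0 <= \esum_(s in ~` A) (f s)%:E)%E by apply: esum_ge0 => i _; rewrite lee_fin.
move: hx E2 T0; rewrite -/(esum _ _) -/(nsum f) (nsumE f0 (summ_nsum hf f0)) fsumEFin //.
case: (\esum_(s in ~` A) (f s)%:E)%E => [r||] //= hx.
  case=> E2 _; rewrite lte_fin in hx; lra.
Qed.

End Tail.

Set Implicit Arguments. Unset Strict Implicit.

Section Pointwise.
Variable R : realType.

Lemma e1 (u : R) : expR u - 1 <= u * expR u.
Proof.
have h := expR_ge1Dx (- u); rewrite expRN in h.
have hp := expR_gt0 u.
have : (1 - u) * expR u <= (expR u)^-1 * expR u by rewrite ler_pM2r.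
rewrite mulVf ?gt_eqF //; lra.
Qed.

Lemma powRE (xx t : R) : 0 < xx -> xx `^ t = expR (t * ln xx).
Proof. by move=> h; rewrite /powR gt_eqF. Qed.

Lemma ln_le_sub1 (y : R) : 0 < y -> ln y <= y - 1.
Proof.
move=> y0; have h := @le_ln1Dx R (y - 1).
have e : 1 + (y - 1) = y by ring.
rewrite e in h; apply: h; lra.
Qed.

Lemma pw_lower (mm xx c t : R) : 0 <= mm -> (0 < mm -> 0 < xx) -> 0 < c ->
  t * (mm * ln xx) <= ln c * mm + c^-1 * (mm * xx `^ t) - mm.
Proof.
move=> m0 mx c0; case: (boolP (mm == 0)) => [/eqP ->|mn0].
  by rewrite !(mulr0, mul0r) subr0 addr0.
have mp : 0 < mm by rewrite lt0r mn0.
have xp := mx mp.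
have hxt : 0 < xx `^ t by apply: powR_gt0.
have hq : 0 < xx `^ t / c by apply: divr_gt0.
have h := ln_le_sub1 hq.
rewrite ln_div ?posrE // ln_powR in h.
have := ler_wpM2l m0 h.
have -> : xx `^ t / c = c^-1 * xx `^ t by rewrite mulrC.
move=> h2; lra.
Qed.

Lemma pw_young (mm xx c r t2 : R) : 0 <= mm -> 0 <= xx -> 0 < c -> 1 < r ->
  c `^ (r - 1) * (mm * xx `^ t2) <=
  r^-1 * (mm * xx `^ (t2 * r)) + (c `^ r * (1 - r^-1)) * mm.
Proof.
move=> m0 x0 c0 r1.
have r0 : 0 < r by lra.
have rm1 : 0 < r - 1 by lra.
have q0 : 0 < r / (r - 1) by apply: divr_gt0.
have pq : r^-1 + (r / (r - 1))^-1 = 1.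
  rewrite invf_div; field; lra.
have := conjugate_powR (powR_ge0 xx t2) (powR_ge0 c (r - 1)) r0 q0 pq.
rewrite -powRrM -powRrM.
have -> : (r - 1) * (r / (r - 1)) = r by field; lra.
rewrite invf_div.
have -> : (r - 1) / r = 1 - r^-1 by field; lra.
move=> h.
have := ler_wpM2l m0 h.
set A := xx `^ t2; set B := c `^ (r - 1); set C := xx `^ (t2 * r); set D := c `^ r.
move=> h2.
have -> : B * (mm * A) = mm * (A * B) by ring.
have -> : r^-1 * (mm * C) + D * (1 - r^-1) * mm = mm * (C / r + D * (1 - r^-1)) by ring.
exact: h2.
Qed.

Lemma pw_d (mm xx t : R) : 0 <= mm -> (0 < mm -> 0 < xx) -> 0 <= t ->
  mm * xx `^ t - mm - t * (mm * ln xx) <= t * ((mm * ln xx) * (xx `^ t - 1)).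
Proof.
move=> m0 mx t0; case: (boolP (mm == 0)) => [/eqP ->|mn0].
  by rewrite !(mulr0, mul0r) subr0.
have mp : 0 < mm by rewrite lt0r mn0.
have xp := mx mp.
rewrite powRE //; set u := t * ln xx.
have h := e1 u.
have h2 : expR u - 1 - u <= u * (expR u - 1) by lra.
have := ler_wpM2l m0 h2.
rewrite /u => h3.
have -> : mm * expR (t * ln xx) - mm - t * (mm * ln xx) = mm * (expR (t * ln xx) - 1 - t * ln xx) by ring.
have -> : t * (mm * ln xx * (expR (t * ln xx) - 1)) = mm * (t * ln xx * (expR (t * ln xx) - 1)) by ring.
exact: h3.
Qed.

Lemma pw_k0 (mm xx t : R) : 0 <= mm -> (0 < mm -> 0 < xx) -> 0 <= t ->
  0 <= (mm * ln xx) * (xx `^ t - 1).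
Proof.
move=> m0 mx t0; case: (boolP (mm == 0)) => [/eqP ->|mn0].
  by rewrite !(mulr0, mul0r).
have mp : 0 < mm by rewrite lt0r mn0.
have xp := mx mp.
rewrite powRE // -mulrA; apply: mulr_ge0 => //.
case: (boolP (0 <= ln xx)) => hy.
  apply: mulr_ge0 => //; have := expR_ge1Dx (t * ln xx).
  have : 0 <= t * ln xx by apply: mulr_ge0.
  lra.
rewrite -ltNge in hy.
apply: mulr_le0 => //; first exact: ltW.
have : t * ln xx <= 0 by apply: mulr_ge0_le0 => //; exact: ltW.
rewrite -expR_le1; lra.
Qed.

Lemma pw_kM (mm xx t t0 : R) : 0 <= mm -> (0 < mm -> 0 < xx) -> 0 <= t -> t <= t0 ->
  (mm * ln xx) * (xx `^ t - 1) <= t * (mm * (ln xx ^+ 2) * (1 + xx `^ t0)).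
Proof.
move=> m0 mx tp tt0; case: (boolP (mm == 0)) => [/eqP ->|mn0].
  by rewrite !(mulr0, mul0r).
have mp : 0 < mm by rewrite lt0r mn0.
have xp := mx mp.
rewrite !powRE //; set y := ln xx.
have -> : mm * y * (expR (t * y) - 1) = mm * (y * (expR (t * y) - 1)) by ring.
have -> : t * (mm * y ^+ 2 * (1 + expR (t0 * y))) = mm * (t * y ^+ 2 * (1 + expR (t0 * y))) by ring.
apply: ler_wpM2l => //.
have E0 := expR_gt0 (t0 * y).
have ty2 : 0 <= t * y ^+ 2 by apply: mulr_ge0 => //; exact: sqr_ge0.
case: (boolP (0 <= y)) => hy.
  have h := e1 (t * y).
  have h2 : expR (t * y) <= expR (t0 * y) by rewrite ler_expR; apply: ler_wpM2r.
  have h3 : y * (expR (t * y) - 1) <= y * (t * y * expR (t * y)) by apply: ler_wpM2l.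
  have h4 : y * (t * y * expR (t * y)) <= t * y ^+ 2 * expR (t0 * y).
    have e : y * (t * y * expR (t * y)) = t * y ^+ 2 * expR (t * y) by ring.
    by rewrite e; apply: ler_wpM2l.
  have : t * y ^+ 2 * expR (t0 * y) <= t * y ^+ 2 * (1 + expR (t0 * y)).
    by apply: ler_wpM2l => //; lra.
  lra.
rewrite -ltNge in hy.
have h := expR_ge1Dx (t * y).
have h3 : y * (expR (t * y) - 1) <= y * (t * y).
  by apply: ler_wnM2l; [exact: ltW|lra].
have : t * y ^+ 2 <= t * y ^+ 2 * (1 + expR (t0 * y)).
  rewrite -{1}[t * y ^+ 2]mulr1; apply: ler_wpM2l => //; lra.
have e : y * (t * y) = t * y ^+ 2 by ring.
rewrite e in h3; lra.
Qed.

Lemma pw_kD (mm xx t t0 : R) : 0 <= mm -> (0 < mm -> 0 < xx) -> 0 <= t -> 0 < t0 -> t <= t0 / 2 ->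
  (mm * ln xx) * (xx `^ t - 1) <= (2 / t0) * (mm * xx `^ t0) + Num.max (- (mm * ln xx)) 0.
Proof.
move=> m0 mx tp t0p tt0; case: (boolP (mm == 0)) => [/eqP ->|mn0].
  by rewrite !(mulr0, mul0r, oppr0) add0r le_max lexx.
have mp : 0 < mm by rewrite lt0r mn0.
have xp := mx mp.
rewrite !powRE //; set y := ln xx.
have Et := expR_gt0 (t * y).
have Mx : 0 <= Num.max (- (mm * y)) 0 by rewrite le_max lexx orbT.
have P0 : 0 <= 2 / t0 * (mm * expR (t0 * y)) by apply: mulr_ge0; [apply: divr_ge0; lra| apply: mulr_ge0 => //; exact: ltW].
case: (boolP (0 <= y)) => hy.
  set v := t0 * y / 2.
  have hv : 0 <= v by rewrite /v; apply: divr_ge0 => //; apply: mulr_ge0 => //; exact: ltW.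
  have Ev := expR_gt0 v.
  have h1 : expR (t * y) <= expR v by rewrite ler_expR /v mulrAC; apply: ler_wpM2r.
  have h2 : v <= expR v by have := expR_ge1Dx v; lra.
  have h3 : y * (expR (t * y) - 1) <= y * expR v.
    by apply: ler_wpM2l => //; lra.
  have h4 : y * expR v = 2 / t0 * (v * expR v) by rewrite /v; field; lra.
  have h5 : v * expR v <= expR v * expR v by apply: ler_wpM2r => //; exact: ltW.
  have h6 : expR v * expR v = expR (t0 * y) by rewrite -expRD /v; congr expR; field.
  have h7 : y * (expR (t * y) - 1) <= 2 / t0 * expR (t0 * y).
    rewrite -h6; apply: le_trans h3 _; rewrite h4; apply: ler_wpM2l => //.
    by apply: divr_ge0; lra.
  have := ler_wpM2l m0 h7.
  have -> : mm * (2 / t0 * expR (t0 * y)) = 2 / t0 * (mm * expR (t0 * y)) by ring.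
  have -> : mm * (y * (expR (t * y) - 1)) = mm * y * (expR (t * y) - 1) by ring.
  lra.
rewrite -ltNge in hy.
have my : mm * y < 0 by rewrite pmulr_rlt0.
rewrite (@max_l _ _ (- (mm * y)) 0); last lra.
have : (mm * y) * (expR (t * y) - 1) <= (mm * y) * (-1).
  by apply: ler_wnM2l; lra.
lra.
Qed.

End Pointwise.

Set Implicit Arguments. Unset Strict Implicit.

Section Main.
Variables (R : realType) (G : choiceType) (m w : G -> R) (a : R).
Hypotheses (m0 : forall s, 0 <= m s) (msum : nsum m = 1%E) (a0 : 0 < a)
  (wa : forall s, a <= w s).

Definition Eg t := fun s => m s * (m s * w s) `^ t.
Definition ell := fun s => m s * ln (m s * w s).

Lemma wpos s : 0 < w s. Proof. exact: lt_le_trans a0 (wa s). Qed.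
Lemma mx s : 0 < m s -> 0 < m s * w s. Proof. by move=> h; apply: mulr_gt0 => //; exact: wpos. Qed.
Lemma xge0 s : 0 <= m s * w s. Proof. by apply: mulr_ge0 => //; exact: ltW (wpos s). Qed.
Lemma summ_m : summ m. Proof. by apply: summ_ge0 => //; rewrite msum ltry. Qed.
Lemma S_m : S m = 1. Proof. by rewrite S_ge0E // msum. Qed.
Lemma S_cm k : S (fun s => k * m s) = k. Proof. by rewrite SZ ?summ_m // S_m mulr1. Qed.
Lemma m_le1 s : m s <= 1. Proof. by have := S_ge_pt s m0 summ_m; rewrite S_m. Qed.
Lemma Eg_ge0 t s : 0 <= Eg t s. Proof. by apply: mulr_ge0 => //; exact: powR_ge0. Qed.

Lemma powR_le1 (y t : R) : 0 <= y -> y <= 1 -> 0 < t -> y `^ t <= 1.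
Proof.
move=> y0 y1 t0; case: (boolP (y == 0)) => [/eqP ->|yn0].
  by rewrite powR0 ?gt_eqF.
have yp : 0 < y by rewrite lt0r yn0.
rewrite powRE // expR_le1; apply: mulr_ge0_le0; [exact: ltW|exact: ln_le0].
Qed.

Lemma Eg_bound t t0 s : 0 < t -> t <= t0 -> Eg t s <= m s + Eg t0 s.
Proof.
move=> tp tt0; rewrite /Eg.
have h : (m s * w s) `^ t <= 1 + (m s * w s) `^ t0.
  case: (boolP (1 <= m s * w s)) => h.
    have := ler_powR h tt0; have := powR_ge0 (m s * w s) t0; lra.
  rewrite -ltNge in h.
  have := powR_le1 (xge0 s) (ltW h) tp; have := powR_ge0 (m s * w s) t0; lra.
have := ler_wpM2l (m0 s) h; rewrite mulrDr mulr1; done.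
Qed.

Lemma summ_Eg t t0 : 0 < t -> t <= t0 -> summ (Eg t0) -> summ (Eg t).
Proof.
move=> tp tt0 h; apply: (summ_le (g := fun s => m s + Eg t0 s)); last exact: summD summ_m h.
move=> s; rewrite !ger0_norm ?Eg_bound //; [exact: addr_ge0 (m0 s) (Eg_ge0 t0 s)|exact: Eg_ge0].
Qed.

Lemma exists_pos : exists s, 0 < m s.
Proof.
case: (pselect (exists s, 0 < m s)) => // h; exfalso.
have z : m = (fun _ => 0).
  apply: funext => s; apply/eqP; rewrite eq_le m0 andbT leNgt; apply/negP => hs.
  by apply: h; exists s.
by move: msum; rewrite z nsum0 => /(congr1 fine) /= /eqP; rewrite eq_sym oner_eq0.
Qed.

Lemma G_pos t : summ (Eg t) -> 0 < S (Eg t).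
Proof.
move=> h; case: exists_pos => s hs.
apply: lt_le_trans (S_ge_pt s (Eg_ge0 t) h).
by apply: mulr_gt0 => //; apply: powR_gt0; exact: mx.
Qed.

Lemma mono t1 t2 : 0 < t2 -> t2 <= t1 -> summ (Eg t1) -> summ (Eg t2) ->
  ln (S (Eg t2)) / t2 <= ln (S (Eg t1)) / t1.
Proof.
move=> t2p t21 h1 h2.
case: (boolP (t2 == t1)) => [/eqP ->|ne]; first by [].
have lt : t2 < t1 by rewrite lt_neqAle ne.
have t1p : 0 < t1 by exact: lt_trans t2p lt.
set r := t1 / t2.
have r1 : 1 < r by rewrite /r ltr_pdivlMr // mul1r.
set c := S (Eg t2).
have c0 : 0 < c := G_pos h2.
have e_t : t2 * r = t1 by rewrite /r; field; rewrite gt_eqF.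
have key := @S_le _ _ (fun s => c `^ (r - 1) * Eg t2 s)
   (fun s => r^-1 * Eg t1 s + (c `^ r * (1 - r^-1)) * m s)
   (summZ _ h2) (summD (summZ _ h1) (summZ _ summ_m)).
have := key (fun s => ltac:(have := @pw_young _ (m s) (m s * w s) c r t2 (m0 s) (xge0 s) c0 r1; rewrite e_t; exact)).
rewrite (SZ _ h2) (SD (summZ (r^-1) h1) (summZ (c `^ r * (1 - r^-1)) summ_m)) (SZ _ h1) (SZ _ summ_m) S_m.
have ec : c `^ r = c `^ (r - 1) * c.
  rewrite -{3}(powRr1 (ltW c0)) -powRD ?subrK //.
  by apply/implyP => _; exact: lt0r_neq0 c0.
rewrite -/c -ec mulr1 => h.
have ri : 0 < r^-1 by rewrite invr_gt0; lra.
have h' : r^-1 * c `^ r <= r^-1 * S (Eg t1) by lra.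
rewrite ler_pM2l // in h'.
have h3 : ln (c `^ r) <= ln (S (Eg t1)) by rewrite ler_ln ?posrE ?powR_gt0 ?G_pos.
rewrite ln_powR in h3.
have -> : ln c / t2 = (r * ln c) / t1 by rewrite /r; field; rewrite !gt_eqF.
by apply: ler_wpM2r => //; rewrite invr_ge0 ltW.
Qed.

Lemma lower t : summ ell -> 0 < t -> summ (Eg t) -> t * S ell <= ln (S (Eg t)).
Proof.
move=> hl tp h; set c := S (Eg t); have c0 : 0 < c := G_pos h.
have hA := summZ (ln c) summ_m.
have hB := summZ (c^-1) h.
have key := @S_le _ _ (fun s => t * ell s) (fun s => ln c * m s + c^-1 * Eg t s - m s)
  (summZ t hl) (summB (summD hA hB) summ_m)
  (fun s => @pw_lower _ (m s) (m s * w s) c t (m0 s) (@mx s) c0).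
rewrite (SZ _ hl) (SB (summD hA hB) summ_m) (SD hA hB) (SZ _ summ_m) (SZ _ h) S_m -/c in key.
rewrite mulVf ?gt_eqF // in key; lra.
Qed.

Lemma upper t0 : summ ell -> 0 < t0 -> summ (Eg t0) -> forall eps, 0 < eps ->
  exists2 delta, 0 < delta & forall t, 0 < t -> t <= delta ->
    ln (S (Eg t)) <= t * (S ell + eps).
Proof.
move=> hl t0p h0 eps ep.
pose D := fun s => 2 / t0 * Eg t0 s + Num.max (- ell s) 0.
have D0 : forall s, 0 <= D s.
  move=> s; apply: addr_ge0; last by rewrite le_max lexx orbT.
  by apply: mulr_ge0; [apply: divr_ge0; lra|exact: Eg_ge0].
have hD : summ D.
  apply: summD; first exact: summZ _ h0.
  apply: summ_ge0; first by move=> s; rewrite le_max lexx orbT.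
  exact: summ_fn hl.
have e2 : 0 < eps / 2 by apply: divr_gt0; lra.
case: (tail D0 hD e2) => A [finA hA].
pose M := fun s => m s * (ln (m s * w s) ^+ 2) * (1 + (m s * w s) `^ t0).
have M0 : forall s, 0 <= M s.
  move=> s; apply: mulr_ge0; first by apply: mulr_ge0 => //; exact: sqr_ge0.
  by have := powR_ge0 (m s * w s) t0; lra.
pose C := S (fun s => if s \in A then M s else 0).
have C0 : 0 <= C by apply: S_ge0 => s; case: ifP.
have hMA := summ_fin M finA.
have hDA : summ (fun s => if s \in A then 0 else D s).
  apply: summ_le hD => s; case: ifP => _; rewrite ?normr0 //.
have hc : 0 < 2 * (C + 1) by lra.
exists (Num.min (t0 / 2) (eps / (2 * (C + 1)))).
  by rewrite lt_min; apply/andP; split; apply: divr_gt0 => //; lra.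
move=> t tp; rewrite le_min => /andP [t1 t2].
have tt0 : t <= t0 by lra.
have hEg := summ_Eg tp tt0 h0.
pose k := fun s => ell s * ((m s * w s) `^ t - 1).
have k0 : forall s, 0 <= k s :=
  fun s => @pw_k0 _ (m s) (m s * w s) t (m0 s) (@mx s) (ltW tp).
have kD : forall s, k s <= D s :=
  fun s => @pw_kD _ (m s) (m s * w s) t t0 (m0 s) (@mx s) (ltW tp) t0p t1.
have hk : summ k.
  apply: summ_le hD => s; rewrite (ger0_norm (k0 s)) (ger0_norm (D0 s)); exact: kD.
have kbound : forall s, k s <= t * (if s \in A then M s else 0) + (if s \in A then 0 else D s).
  move=> s; case: ifP => _.
    by rewrite addr0; exact: (@pw_kM _ (m s) (m s * w s) t t0 (m0 s) (@mx s) (ltW tp) tt0).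
  by rewrite mulr0 add0r; exact: kD s.
have Sk := S_le hk (summD (summZ t hMA) hDA) kbound.
rewrite (SD (summZ t hMA) hDA) (SZ _ hMA) -/C in Sk.
move: t2; rewrite ler_pdivlMr // => t2.
have Sk' : S k <= eps by lra.
have hd := @S_le _ _ (fun s => Eg t s - m s - t * ell s) (fun s => t * k s)
  (summB (summB hEg summ_m) (summZ t hl)) (summZ t hk)
  (fun s => @pw_d _ (m s) (m s * w s) t (m0 s) (@mx s) (ltW tp)).
rewrite (SB (summB hEg summ_m) (summZ t hl)) (SB hEg summ_m) (SZ _ hl) (SZ _ hk) S_m in hd.
have G0 := G_pos hEg.
have := ln_le_sub1 G0.
have : t * S k <= t * eps by apply: ler_wpM2l => //; exact: ltW.
lra.
Qed.

End Main.

Unset Implicit Arguments. Set Strict Implicit.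

Lemma term_id (R : realType) (mm ww p : R) : 0 <= mm -> 0 < ww -> 1 < p ->
  `|mm| `^ (conjexp p) * (ww `^ p^-1) `^ (conjexp p) = mm * (mm * ww) `^ ((p - 1)^-1).
Proof.
move=> m0 w0 p1; rewrite /conjexp ger0_norm //.
have pn0 : p != 0 by rewrite gt_eqF //; lra.
have pm1 : p - 1 != 0 by rewrite gt_eqF //; lra.
have tp : 0 < (p - 1)^-1 by rewrite invr_gt0; lra.
have pq : p^-1 * (p / (p - 1)) = (p - 1)^-1 by field; lra.
have q1 : p / (p - 1) = 1 + (p - 1)^-1 by field; lra.
rewrite -powRrM pq q1.
case: (boolP (mm == 0)) => [/eqP ->|mn0].
  by rewrite powR0 ?mul0r // gt_eqF //; lra.
have mp : 0 < mm by rewrite lt0r mn0.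
rewrite powRM //; last exact: ltW.
rewrite powRD; last by apply/implyP => _.
by rewrite powRr1 // mulrA.
Qed.

Lemma wsum_eq (R : realType) (G : choiceType) (mu omega : G -> R) (p : R) :
  (forall s, 0 <= mu s) -> (forall s, 0 < omega s) -> 1 < p ->
  wsum (conjexp p) (wpow omega p) mu = nsum (Eg mu omega ((p - 1)^-1)).
Proof.
move=> m0 w0 p1; rewrite /wsum /nsum; apply: eq_esum => s _.
by rewrite /wpow term_id.
Qed.

Lemma Phi_eq (R : realType) (G : choiceType) (mu omega : G -> R) (p : R) :
  (forall s, 0 <= mu s) -> (forall s, 0 < omega s) -> 1 < p ->
  Phi omega mu p = - (ln (S (Eg mu omega ((p - 1)^-1))) / (p - 1)^-1).
Proof.
move=> m0 w0 p1; rewrite /Phi /wnorm wsum_eq // -S_ge0E; last first.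
  by move=> s; apply: mulr_ge0 => //; exact: powR_ge0.
rewrite ln_powR /conjexp invf_div invrK; congr (- _).
have pm1 : p - 1 != 0 by rewrite gt_eqF //; lra.
have pn0 : p != 0 by rewrite gt_eqF //; lra.
field. all: lra.
Qed.

Lemma fin_sub (R : realType) (x y : \bar R) : (0 <= x)%E -> y \is a fin_num ->
  (x - y < +oo)%E -> (x < +oo)%E.
Proof.
case: x => [x| |] //= _; first by rewrite ltry.
case: y => [y| |] //= _.
Qed.

Theorem theorem4p4 (R : realType) (G : countType)
    (mul : G -> G -> G) (e : G) (inv : G -> G) (omega mu : G -> R) (p0 q0 : R) :
  is_group mul e inv ->
  is_weight mul omega ->
  is_prob mu ->
  1 < q0 -> q0 <= p0 -> p0^-1 + q0^-1 = 1 ->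
  in_lq q0 (wpow omega p0) mu ->
  ((forall p, p0 <= p -> in_lq (conjexp p) (wpow omega p) mu) /\
   (forall p1 p2, p0 <= p1 -> p1 <= p2 -> Phi omega mu p1 <= Phi omega mu p2)) /\
  ((shannon mu < +oo)%E -> (log_moment omega mu < +oo)%E ->
   ((Phi omega mu p)%:E @[p --> +oo] --> wshannon omega mu)).
Proof.
move=> _ [[a a0 wa] _] [m0 msum] q1 qp hpq hlq.
have msum' : nsum mu = 1%E := msum.
have w0 : forall s, 0 < omega s by move=> s; exact: lt_le_trans a0 (wa s).
have p1 : 1 < p0 by lra.
have eq0 : q0 = conjexp p0.
  have e1 : q0^-1 = (p0 - 1) / p0.
    have -> : q0^-1 = 1 - p0^-1 by rewrite -hpq; ring.
    by field; rewrite gt_eqF //; lra.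
  by rewrite -[q0]invrK e1 invf_div.
set t0 := (p0 - 1)^-1.
have t0p : 0 < t0 by rewrite invr_gt0; lra.
have h0 : summ (Eg mu omega t0).
  apply: summ_ge0; first by move=> s; exact: Eg_ge0.
  by move: hlq; rewrite /in_lq eq0 wsum_eq.
have tle : forall p, p0 <= p -> (p - 1)^-1 <= t0.
  by move=> p hp; rewrite /t0 lef_pV2 ?posrE; lra.
have tpos : forall p, p0 <= p -> 0 < (p - 1)^-1.
  by move=> p hp; rewrite invr_gt0; lra.
have hE : forall p, p0 <= p -> summ (Eg mu omega ((p - 1)^-1)).
  by move=> p hp; apply: (summ_Eg m0 msum' a0 wa (tpos p hp) (tle p hp) h0).
split; [split|].
- move=> p hp; rewrite /in_lq wsum_eq //; last by lra.
  exact: summ_nsum (hE p hp) (Eg_ge0 _ m0 _).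
- move=> q r hq hqr.
  rewrite !Phi_eq //; try lra.
  rewrite lerN2.
  apply: (mono m0 msum' a0 wa (tpos r (le_trans hq hqr))).
  + by rewrite lef_pV2 ?posrE; lra.
  + exact: hE.
  + exact: hE (le_trans hq hqr).
move=> hsh hlm.
pose g1 := fun s => mu s * ln (omega s).
pose h := fun s => - (mu s * ln (mu s)).
have hfn1 : (nsum (fn g1) < +oo)%E.
  apply: (nsum_lt (g := fun s => Num.max (- ln a) 0 * mu s)).
    move=> s; rewrite /fn /g1.
    have la : ln a <= ln (omega s) by rewrite ler_ln ?posrE // wa.
    have M : - ln a <= Num.max (- ln a) 0 by rewrite le_max lexx.
    have M0 : 0 <= Num.max (- ln a) 0 by rewrite le_max lexx orbT.
    rewrite ge_max; apply/andP; split; last exact: mulr_ge0.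
    have : - ln (omega s) <= Num.max (- ln a) 0 by lra.
    move=> /(ler_wpM2l (m0 s)) hh.
    have eN : - (mu s * ln (omega s)) = mu s * - ln (omega s) by ring.
    by rewrite eN [X in _ <= X]mulrC.
  by rewrite nsumZ // ?le_max ?lexx ?orbT // msum' mule1 ltry.
have hfp1 : (nsum (fp g1) < +oo)%E.
  apply: (@fin_sub R _ _ (nsum_ge0 (fp_ge0 g1)) (nsum_fin (fn_ge0 g1) hfn1)).
  exact: hlm.
have hfnh : nsum (fn h) = 0%E.
  have -> : fn h = (fun _ => 0).
    apply: funext => s; rewrite /fn /h opprK.
    rewrite (@max_r _ _ (mu s * ln (mu s)) 0) //.
    apply: mulr_ge0_le0 => //; apply: ln_le0; exact: m_le1 m0 msum' s.
  exact: nsum0.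
have hfph : (nsum (fp h) < +oo)%E.
  have hs : (nsum (fp h) - nsum (fn h) < +oo)%E := hsh.
  by rewrite hfnh sube0 in hs.
have hl : summ (ell mu omega).
  apply: (summ_le (g := fun s => fp h s + (fp g1 s + fn g1 s))).
    move=> s.
    have RHS0 : 0 <= fp h s + (fp g1 s + fn g1 s).
      apply: addr_ge0; [exact: fp_ge0| apply: addr_ge0; [exact: fp_ge0|exact: fn_ge0]].
    rewrite [X in _ <= X]ger0_norm //.
    case: (boolP (mu s == 0)) => [/eqP z|mn0].
      by rewrite /ell z mul0r normr0.
    have mp : 0 < mu s by rewrite lt0r mn0 m0.
    have hA : mu s * ln (mu s) <= 0.
      apply: mulr_ge0_le0 => //; apply: ln_le0; exact: m_le1 m0 msum' s.
    rewrite /ell /fp /fn /h /g1 lnM ?posrE // mulrDr.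
    case: (maxcase (mu s * ln (mu s))) => [[? [_ [-> _]]]|[? [_ [-> _]]]];
    case: (maxcase (mu s * ln (omega s))) => [[? [-> [-> _]]]|[? [-> [-> _]]]];
    case: (maxcase (mu s * ln (mu s) + mu s * ln (omega s))) => [[? [_ [_ ->]]]|[? [_ [_ ->]]]]; lra.
  apply: summD; first exact: summ_ge0 (fp_ge0 h) hfph.
  by apply: summD; [exact: summ_ge0 (fp_ge0 g1) hfp1 | exact: summ_ge0 (fn_ge0 g1) hfn1].
have hW : wshannon omega mu = (- S (ell mu omega))%:E.
  have -> : wshannon omega mu = (nsum (fn (ell mu omega)) - nsum (fp (ell mu omega)))%E.
    rewrite /wshannon /sumG; congr (_ - _)%E; apply: eq_esum => s _ //; by rewrite opprK.
  rewrite (nsumE (fn_ge0 _) (summ_fn hl)) (nsumE (fp_ge0 _) (summ_fp hl)) -EFinB /S.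
  by rewrite opprB.
rewrite hW.
apply: cvg_EFin; first by apply: nearW => x.
apply/cvgrPdist_le => eps ep.
have [delta dp hd] := upper m0 msum' a0 wa hl t0p h0 ep.
exists (Num.max p0 (1 + delta^-1)); split; first by rewrite num_real.
move=> p; rewrite gt_max => /andP [hp1 hp2].
have hp : p0 <= p by lra.
have tp := tpos p hp.
have hEp := hE p hp.
have di : 0 < delta^-1 by rewrite invr_gt0.
have tle_d : (p - 1)^-1 <= delta.
  by rewrite -[delta]invrK lef_pV2 ?posrE; lra.
have L1 := lower m0 msum' a0 wa hl tp hEp.
have L2 := hd _ tp tle_d.
rewrite /= Phi_eq //; last by lra.
move: L1 L2 tp; set t := (p - 1)^-1; set Gt := ln (S (Eg mu omega t)) => L1 L2 tp.
have A1 : S (ell mu omega) <= Gt / t by rewrite ler_pdivlMr // mulrC.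
have A2 : Gt / t <= S (ell mu omega) + eps by rewrite ler_pdivrMr // mulrC.
rewrite opprK ler_norml; apply/andP; split; lra.
Qed.
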